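(* Let $\sigma$ be the morphism on $\{a,b,c\}$ given by $\sigma(a)=acaba$, $\sigma(b)=bac$, $\sigma(c)=cab$. Then the infinite fixed point of $\sigma$ beginning with $a$ is $4$-automatic, and hence $2$-automatic.
   Context: For an integer $q\ge 2$, a sequence is $q$-automatic if it is the image under a letter-to-letter map of a fixed point of a morphism all of whose letter-images have length $q$. *)

(* Defs.v *)
From mathcomp Require Import all_boot.
Set Implicit Arguments. Unset Strict Implicit. Unset Printing Implicit Defensive.

Inductive letter := La | Lb | Lc.

Definition sigma (x : letter) : seq letter :=
  match x with
  | La => [:: La; Lc; La; Lb; La]
  | Lb => [:: Lb; La; Lc]
  | Lc => [:: Lc; La; Lb]
  end.

Definition sigma_word (s : seq letter) : seq letter := flatten (map sigma s).

(* Since sigma(a) begins with a, sigma^n(a) is a prefix of sigma^(n+1)(a),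
   and |sigma^n(a)| >= n+1, so letter i is read off sigma^(i+1)(a). *)
Definition sigma_fixpoint (i : nat) : letter :=
  nth La (iter i.+1 sigma_word [:: La]) i.

(* u : nat -> B is a fixed point of the q-uniform morphism tau
   (tau(b) = tnth (tau b) 0 ... tnth (tau b) (q-1)): tau(u) = u, i.e.
   the block of positions q*n .. q*n+q-1 of u is tau(u n). *)
Definition is_uniform_fixpoint (q : nat) (B : Type) (tau : B -> q.-tuple B)
  (u : nat -> B) : Prop :=
  forall (n : nat) (j : 'I_q), u (q * n + j) = tnth (tau (u n)) j.

Definition automatic (q : nat) (A : Type) (w : nat -> A) : Prop :=
  exists (B : finType) (tau : B -> q.-tuple B) (u : nat -> B) (f : B -> A),
    is_uniform_fixpoint tau u /\ (forall n, w n = f (u n)).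

(* Main.v *)
Require Import Defs.
From mathcomp Require Import all_boot.
From HB Require Import structures.
From mathcomp Require Import zify.

Definition l2o (l : letter) : 'I_3 :=
  match l with La => inord 0 | Lb => inord 1 | Lc => inord 2 end.
Definition o2l (o : 'I_3) : letter :=
  match val o with 0 => La | 1 => Lb | _ => Lc end.
Lemma l2oK : cancel l2o o2l.
Proof. by case; rewrite /o2l /= inordK. Qed.
HB.instance Definition _ := Finite.copy letter (can_type l2oK).

Definition tau (l : letter) : 4.-tuple letter :=
  match l with
  | La => [tuple La; Lc; La; Lb]
  | Lb => [tuple La; Lb; La; Lc]
  | Lc => [tuple La; Lc; La; Lb]
  end.

Fixpoint Tf (f n : nat) : letter :=
  match f with
  | 0 => La
  | f'.+1 => if n == 0 then La else tnth (tau (Tf f' (n %/ 4))) (inord (n %% 4))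
  end.

Definition T n := Tf n n.

Lemma Tf_indep f1 f2 n : n <= f1 -> n <= f2 -> Tf f1 n = Tf f2 n.
Proof.
elim: f1 f2 n => [|f IH] [|g] n /=.
- by [].
- by rewrite leqn0 => /eqP -> _.
- by move=> _; rewrite leqn0 => /eqP ->.
case: eqP => // /eqP n0 h1 h2; rewrite (IH g) //.
  have := leq_div n 4; have : n %/ 4 < n by rewrite ltn_Pdiv // lt0n. lia.
have := leq_div n 4; have : n %/ 4 < n by rewrite ltn_Pdiv // lt0n. lia.
Qed.

Lemma T_rec n (j : 'I_4) : T (4 * n + j) = tnth (tau (T n)) j.
Proof.
rewrite /T; case E: (4 * n + j) => [|k] /=.
  have -> : n = 0 by lia.
  have -> : j = ord0.
    by apply: val_inj => /=; move: E => /eqP; rewrite addn_eq0 => /andP[_ /eqP].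
  by [].
rewrite -E.
have -> : (4 * n + j) %/ 4 = n.
  by rewrite mulnC divnMDl // divn_small ?addn0.
rewrite (Tf_indep k n) //; last by move: E; lia.
have -> : (inord ((4 * n + j) %% 4) : 'I_4) = j.
  by apply: val_inj; rewrite /= mulnC modnMDl modn_small // inordK.
by [].
Qed.

Lemma T4 n (j : nat) (hj : j < 4) : T (4 * n + j) = tnth (tau (T n)) (Ordinal hj).
Proof. exact: (T_rec n (Ordinal hj)). Qed.

Lemma T_even k : T (2 * k) = La.
Proof.
have -> : 2 * k = 4 * (k %/ 2) + 2 * (k %% 2).
  by rewrite {1}(divn_eq k 2); rewrite mulnDr mulnA (mulnC _ (k %/ 2)); lia.
case: (k %% 2) (ltn_pmod k (isT : 0 < 2)) => [|[|//]] _.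
- by rewrite muln0 (@T4 _ 0 isT); case: (T _).
- by rewrite muln1 (@T4 _ 2 isT); case: (T _).
Qed.

Lemma T_odd k : T (2 * k).+1 <> La.
Proof.
have -> : (2 * k).+1 = 4 * (k %/ 2) + (2 * (k %% 2) + 1).
  by rewrite {1}(divn_eq k 2); rewrite mulnDr mulnA (mulnC _ (k %/ 2)); lia.
case: (k %% 2) (ltn_pmod k (isT : 0 < 2)) => [|[|//]] _.
- by rewrite (@T4 _ 1 isT); case: (T _).
- by rewrite (@T4 _ 3 isT); case: (T _).
Qed.

Lemma block k : map T (iota (8 * k) 8) = sigma (T (2 * k)) ++ sigma (T (2 * k).+1).
Proof.
rewrite T_even /=.
have E0 : forall i (hi : i < 4), T (8 * k + i) = tnth (tau La) (Ordinal hi).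
  by move=> i hi; rewrite -(T_even k) -T4; congr T; lia.
have E1 : forall i (hi : i < 4), T (8 * k + 4 + i) = tnth (tau (T (2 * k).+1)) (Ordinal hi).
  by move=> i hi; rewrite -T4; congr T; lia.
have -> : (8 * k).+3.+4 = 8 * k + 4 + 3 by lia.
have -> : (8 * k).+2.+4 = 8 * k + 4 + 2 by lia.
have -> : (8 * k).+1.+4 = 8 * k + 4 + 1 by lia.
have -> : (8 * k).+4 = 8 * k + 4 + 0 by lia.
have -> : (8 * k).+3 = 8 * k + 3 by lia.
have -> : (8 * k).+2 = 8 * k + 2 by lia.
have -> : (8 * k).+1 = 8 * k + 1 by lia.
rewrite -{1}[8 * k]addn0.
rewrite (E0 0 isT) (E0 1 isT) (E0 2 isT) (E0 3 isT).
rewrite (E1 0 isT) (E1 1 isT) (E1 2 isT) (E1 3 isT).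
have : T (2 * k).+1 <> La by exact: T_odd.
clear E0 E1; by case: (T (2 * k).+1).
Qed.


Lemma sigma_word_cat s1 s2 : sigma_word (s1 ++ s2) = sigma_word s1 ++ sigma_word s2.
Proof. by rewrite /sigma_word map_cat flatten_cat. Qed.

Lemma mk_even k : sigma_word (mkseq T (2 * k)) = mkseq T (8 * k).
Proof.
elim: k => [|k IH]; first by [].
rewrite /mkseq.
have -> : 2 * k.+1 = 2 * k + 2 by lia.
have -> : 8 * k.+1 = 8 * k + 8 by lia.
rewrite (iotaD 0 (2 * k) 2) (iotaD 0 (8 * k) 8) !map_cat sigma_word_cat.
rewrite -[map T (iota 0 (2 * k))]/(mkseq T _) IH /mkseq add0n block.
congr (_ ++ _).
have -> : iota (2 * k) 2 = [:: 2 * k; (2 * k).+1] by [].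
by rewrite /sigma_word /= cats0.
Qed.

Lemma mk_odd k : sigma_word (mkseq T (2 * k).+1) = mkseq T (8 * k + 5).
Proof.
rewrite /mkseq -addn1 (iotaD 0 (2 * k) 1) (iotaD 0 (8 * k) 5) !map_cat sigma_word_cat.
rewrite -[map T (iota 0 (2 * k))]/(mkseq T _) mk_even /mkseq add0n.
congr (_ ++ _).
rewrite /sigma_word /= T_even /=.
have E0 : forall i (hi : i < 4), T (8 * k + i) = tnth (tau La) (Ordinal hi).
  by move=> i hi; rewrite -(T_even k) -T4; congr T; lia.
have -> : (8 * k).+4 = 2 * (4 * k + 2) by lia.
have -> : (8 * k).+3 = 8 * k + 3 by lia.
have -> : (8 * k).+2 = 8 * k + 2 by lia.
have -> : (8 * k).+1 = 8 * k + 1 by lia.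
rewrite T_even -{1}[8 * k]addn0 (E0 0 isT) (E0 1 isT) (E0 2 isT) (E0 3 isT).
by [].
Qed.

Lemma iter_mk k : exists h, iter k sigma_word [:: La] = mkseq T (2 * h).+1 /\ k <= 2 * h.
Proof.
elim: k => [|k [h [IH hk]]]; first by exists 0.
exists (4 * h + 2); split; last by lia.
rewrite iterS IH mk_odd; congr mkseq; lia.
Qed.

Lemma fix_T i : sigma_fixpoint i = T i.
Proof.
have [h [E hk]] := iter_mk i.+1.
by rewrite /sigma_fixpoint E nth_mkseq //; lia.
Qed.

Lemma T4i m i : i < 4 -> T (4 * m + i) = tnth (tau (T m)) (inord i).
Proof.
move=> hi; rewrite (@T4 m i hi); congr tnth; apply: val_inj; by rewrite /= inordK.
Qed.

Definition tau2 (x : letter * bool * letter) : 2.-tuple (letter * bool * letter) :=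
  let: (p, r, q) := x in
  [tuple (q, false, tnth (tau p) (inord (2 * r))); (q, true, tnth (tau p) (inord (2 * r + 1)))].

Definition u2 n : letter * bool * letter := (T n./2, odd n, T n).

Theorem mainTheorem8 : automatic 4 sigma_fixpoint /\ automatic 2 sigma_fixpoint.
Proof.
split.
  exists letter, tau, T, id; split; first exact: T_rec.
  by move=> n; rewrite fix_T.
exists (letter * bool * letter)%type, tau2, u2, (fun x => x.2); split; last first.
  by move=> n; rewrite fix_T.
move=> n j; rewrite /u2 /tau2.
have Hn : 2 * n = 4 * n./2 + 2 * odd n.
  by rewrite -{1}(odd_double_half n) mulnDr mul2n -doubleMr; lia.
case: j => [[|[|//]] hj].
- have -> : (2 * n + 0)./2 = n by rewrite addn0 mul2n doubleK.
  have -> : odd (2 * n + 0) = false by rewrite addn0 mul2n odd_double.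
  by rewrite addn0 Hn T4i //; case: (odd n).
- have -> : (2 * n + 1)./2 = n by rewrite addn1 mul2n /= uphalf_double.
  have -> : odd (2 * n + 1) = true by rewrite addn1 /= mul2n odd_double.
  by rewrite Hn -addnA T4i //; case: (odd n).
Qed.
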